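(* Let $A$ be an abelian group, $a\in A$ and $\varphi$ an endomorphism of $A$. If $\varphi$ is inertial or left-inertial, then the torsion subgroup of $\mathbb{Z}[\varphi]a$ is finite.
   Context: Abelian groups are written additively. An endomorphism $\varphi$ of $A$ is inertial if $(\varphi(X)+X)/X$ is finite for every subgroup $X\le A$, and left-inertial if $X/(X\cap\varphi(X))$ is finite for every $X\le A$. $\mathbb{Z}[\varphi]a$ is the smallest $\varphi$-invariant subgroup of $A$ containing $a$. *)

(* Defs.v *)
From HB Require Import structures.
From mathcomp Require Import all_boot all_order all_algebra.
Set Implicit Arguments. Unset Strict Implicit. Unset Printing Implicit Defensive.
Import GRing.Theory.
Local Open Scope ring_scope.

Definition is_subgroup (A : zmodType) (X : A -> Prop) : Prop :=
  X 0 /\ (forall x y, X x -> X y -> X (x - y)).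

(* H/K is finite (for K <= H): H meets only finitely many cosets of K,
   i.e. there is a finite list of elements of H representing every coset. *)
Definition finite_index (A : zmodType) (H K : A -> Prop) : Prop :=
  exists s : seq A, (forall y, y \in s -> H y) /\
    (forall x, H x -> exists2 y, y \in s & K (x - y)).

Definition img (A : zmodType) (phi : A -> A) (X : A -> Prop) : A -> Prop :=
  fun z => exists2 x, X x & z = phi x.

Definition img_plus (A : zmodType) (phi : A -> A) (X : A -> Prop) : A -> Prop :=
  fun z => exists x y, X x /\ X y /\ z = phi x + y.

Definition inertial (A : zmodType) (phi : {additive A -> A}) : Prop :=
  forall X : A -> Prop, is_subgroup X -> finite_index (img_plus phi X) X.

Definition left_inertial (A : zmodType) (phi : {additive A -> A}) : Prop :=
  forall X : A -> Prop, is_subgroup X ->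
    finite_index X (fun z => X z /\ img phi X z).

Definition Zphi (A : zmodType) (phi : {additive A -> A}) (a : A) : A -> Prop :=
  fun z => forall H : A -> Prop, is_subgroup H -> (forall x, H x -> H (phi x)) ->
    H a -> H z.

Definition torsion_part (A : zmodType) (H : A -> Prop) : A -> Prop :=
  fun z => H z /\ exists n : nat, (0 < n)%N /\ z *+ n = 0.

Definition finite_pred (A : zmodType) (P : A -> Prop) : Prop :=
  exists s : seq A, forall z, P z -> z \in s.

(* Main.v *)
Require Import Defs.
From mathcomp Require Import all_boot all_order all_algebra.
From Stdlib Require Import Classical ClassicalEpsilon.
Set Implicit Arguments. Unset Strict Implicit. Unset Printing Implicit Defensive.
Import GRing.Theory Num.Theory.
Local Open Scope ring_scope.

Definition evt (A : zmodType) (phi : {additive A -> A}) (p : {poly int}) (t : A) : A :=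
  \sum_(i < size p) iter i phi t *~ p`_i.

Lemma evt_wid (A : zmodType) (phi : {additive A -> A}) (p : {poly int}) t n :
  (size p <= n)%N -> evt phi p t = \sum_(i < n) iter i phi t *~ p`_i.
Proof.
move=> hn; rewrite /evt (big_ord_widen n (fun i => iter i phi t *~ p`_i) hn).
rewrite big_mkcond /=; apply: eq_bigr => i _.
by case: ifP => // /negbT; rewrite -leqNgt => /(nth_default 0) ->; rewrite mulr0z.
Qed.

Lemma evtD (A : zmodType) (phi : {additive A -> A}) p q t :
  evt phi (p + q) t = evt phi p t + evt phi q t.
Proof.
set n := maxn (size p) (size q).
rewrite (@evt_wid _ _ (p + q) t n); last first.
  by apply: leq_trans (size_polyD _ _) _.
rewrite (@evt_wid _ _ p t n) ?leq_maxl // (@evt_wid _ _ q t n) ?leq_maxr //.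
by rewrite -big_split; apply: eq_bigr => i _; rewrite coefD mulrzDr.
Qed.

Lemma evtZ (A : zmodType) (phi : {additive A -> A}) (c : int) p t :
  evt phi (c *: p) t = evt phi p t *~ c.
Proof.
rewrite (@evt_wid _ _ (c *: p) t (size p)) ?size_scale_leq // /evt.
rewrite mulrz_suml; apply: eq_bigr => i _; by rewrite coefZ mulrzA mulrzAC.
Qed.

Lemma evtN (A : zmodType) (phi : {additive A -> A}) p t :
  evt phi (- p) t = - evt phi p t.
Proof. by rewrite -scaleN1r evtZ mulrN1z. Qed.

Lemma evtB (A : zmodType) (phi : {additive A -> A}) p q t :
  evt phi (p - q) t = evt phi p t - evt phi q t.
Proof. by rewrite evtD evtN. Qed.

Lemma evt0 (A : zmodType) (phi : {additive A -> A}) t : evt phi 0 t = 0.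
Proof. by rewrite /evt size_poly0 big_ord0. Qed.

Lemma evtC (A : zmodType) (phi : {additive A -> A}) (c : int) t :
  evt phi c%:P t = t *~ c.
Proof.
rewrite (@evt_wid _ _ _ t 1) ?size_polyC ?leq_b1 // big_ord1 /= coefC //.
Qed.

Lemma iter_add (A : zmodType) (phi : {additive A -> A}) n :
  forall u v : A, iter n phi (u + v) = iter n phi u + iter n phi v.
Proof. elim: n => //= n IH u v; by rewrite IH raddfD. Qed.

Lemma iter_z (A : zmodType) (phi : {additive A -> A}) n (c : int) :
  forall u : A, iter n phi (u *~ c) = iter n phi u *~ c.
Proof. elim: n => //= n IH u; by rewrite IH raddfMz. Qed.

Lemma iter_0 (A : zmodType) (phi : {additive A -> A}) n : iter n phi (0 : A) = 0.
Proof. elim: n => //= n ->; exact: raddf0. Qed.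

Lemma evt_addt (A : zmodType) (phi : {additive A -> A}) p u v :
  evt phi p (u + v) = evt phi p u + evt phi p v.
Proof. rewrite /evt -big_split; apply: eq_bigr => i _; by rewrite iter_add mulrzDl. Qed.

Lemma evt_zt (A : zmodType) (phi : {additive A -> A}) p (c : int) u :
  evt phi p (u *~ c) = evt phi p u *~ c.
Proof. rewrite /evt mulrz_suml; apply: eq_bigr => i _; by rewrite iter_z mulrzAC. Qed.

Lemma evt_nt (A : zmodType) (phi : {additive A -> A}) p (n : nat) u :
  evt phi p (u *+ n) = evt phi p u *+ n.
Proof. exact: (evt_zt phi p n%:Z u). Qed.

Lemma evt_0t (A : zmodType) (phi : {additive A -> A}) p : evt phi p 0 = 0.
Proof. by rewrite /evt big1 // => i _; rewrite iter_0 mul0rz. Qed.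

Lemma evt_phi (A : zmodType) (phi : {additive A -> A}) p t :
  evt phi p (phi t) = phi (evt phi p t).
Proof.
rewrite /evt raddf_sum; apply: eq_bigr => i _; by rewrite raddfMz -iterSr iterS.
Qed.

Lemma evtMX (A : zmodType) (phi : {additive A -> A}) p t :
  evt phi (p * 'X) t = evt phi p (phi t).
Proof.
have hs : (size (p * 'X)%R <= (size p).+1)%N.
  by apply: leq_trans (size_polyMleq _ _) _; rewrite size_polyX addn2.
rewrite (@evt_wid _ _ _ t _ hs) big_ord_recl coefMX /= mulr0z add0r /evt.
idtac.
by apply: eq_bigr => i _; rewrite coefMX /=; rewrite -iterSr.
Qed.

Lemma evtM (A : zmodType) (phi : {additive A -> A}) p :
  forall q t, evt phi (p * q) t = evt phi p (evt phi q t).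
Proof.
elim/poly_ind: p => [|p c IH] q t; first by rewrite mul0r !evt0.
rewrite mulrDl -mulrA (mulrC 'X) evtD IH mul_polyC evtZ evtMX evtD evtC evtMX.
by rewrite evt_phi.
Qed.

Lemma evtXn (A : zmodType) (phi : {additive A -> A}) n t :
  evt phi 'X^n t = iter n phi t.
Proof.
elim: n t => [|n IH] t; first by rewrite expr0 -polyC1 evtC.
by rewrite exprSr evtMX IH iterSr.
Qed.

Lemma Zphi_ev (A : zmodType) (phi : {additive A -> A}) a z :
  Zphi phi a z -> exists p, z = evt phi p a.
Proof.
move=> h; apply: (h (fun w => exists p, w = evt phi p a)).
- split; first by exists 0; rewrite evt0.
  by move=> x y [p ->] [q ->]; exists (p - q); rewrite evtB.
- by move=> x [p ->]; exists (p * 'X); rewrite evtMX evt_phi.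
- by exists 1; rewrite -polyC1 evtC.
Qed.

Lemma pigeon (A : eqType) (s : seq A) (P : nat -> A -> Prop) :
  (forall k, exists y, y \in s /\ P k y) ->
  exists k1 k2 y, (k1 < k2)%N /\ P k1 y /\ P k2 y.
Proof.
move=> H.
pose f k := proj1_sig (constructive_indefinite_description _ (H k)).
have hf k : f k \in s /\ P k (f k) := proj2_sig (constructive_indefinite_description _ (H k)).
pose l := [seq f k | k <- iota 0 (size s).+1].
have : ~~ uniq l.
  apply/negP => u.
  have : {subset l <= s} by move=> y /mapP [k _ ->]; exact (hf k).1.
  by move/(uniq_leq_size u); rewrite size_map size_iota ltnn.
case/(uniqPn (f 0%N)) => i [j [lij hj e]].
rewrite size_map size_iota in hj.
rewrite !(nth_map 0%N) ?size_iota ?(ltn_trans lij) // !nth_iota ?(ltn_trans lij) // !add0n in e.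
exists i, j, (f i); split => //; split; first exact (hf i).2.
by rewrite e; exact (hf j).2.
Qed.

Lemma monic_of (m : {poly int}) k : (size m <= k.+1)%N -> m`_k = 1 -> m \is monic.
Proof.
move=> hs hk.
have hk' : (k < size m)%N.
  rewrite ltnNge; apply/negP => /leq_sizeP/(_ k (leqnn k)); rewrite hk => /eqP.
  by rewrite oner_eq0.
have e : size m = k.+1 by apply/eqP; rewrite eqn_leq hs hk'.
by rewrite monicE lead_coefE e /= hk.
Qed.

Lemma QP (A : zmodType) (phi : {additive A -> A}) (t : A) (p : nat) :
  prime p -> forall n (R q : {poly int}), (size R <= n)%N -> (exists i, R`_i = 1) ->
  evt phi R t = evt phi q t *+ p ->
  exists m q', m \is monic /\ evt phi m t = evt phi q' t *+ p.
Proof.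
move=> pp; elim=> [|n IH] R q hs [i hi] he.
  move: hs; rewrite leqn0 size_poly_eq0 => /eqP R0.
  by move: hi; rewrite R0 coef0 => /eqP; rewrite eq_sym oner_eq0.
have R0 : R != 0 by apply/eqP => R0; move: hi; rewrite R0 coef0 => /eqP; rewrite eq_sym oner_eq0.
set k := (size R).-1.
have hsR : size R = k.+1 by rewrite /k (polySpred R0).
set c := lead_coef R.
have hc : R`_k = c by rewrite /c lead_coefE.
have [pc|npc] := boolP ((p%:Z %| c)%Z).
- case/dvdzP: pc => c1 hc1.
  pose R' := R - c *: 'X^k.
  apply: (IH R' (q - c1 *: 'X^k)).
  + apply/leq_sizeP => j hj; rewrite /R' coefB coefZ coefXn.
    case: (eqVneq j k) => [->|njk]; first by rewrite hc mulr1 subrr.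
    rewrite mulr0 subr0 nth_default // hsR.
    by rewrite ltn_neqAle eq_sym njk /= (leq_trans _ hj) // -ltnS -hsR.
  + exists i; rewrite /R' coefB coefZ coefXn.
    case: (eqVneq i k) => [eik|nik]; last by rewrite mulr0 subr0.
    exfalso; move: hi; rewrite eik hc hc1 => h1.
    have : (p%:Z %| 1)%Z by apply/dvdzP; exists c1.
    by rewrite dvdzE /= dvdn1 => /eqP p1; move: (prime_gt1 pp); rewrite p1.
  + rewrite /R' evtB evtZ he evtB evtZ evtXn hc1 mulrzA.
    by rewrite !pmulrn mulrzBl.
- have cop : coprimez p c.
    rewrite coprimezE /= prime_coprime //.
  case/coprimezP: cop => [[u v]] /= huv.
  exists (v *: R + (u * p%:Z) *: 'X^k), (v *: q + u *: 'X^k); split.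
  + apply: (@monic_of _ k).
      apply: leq_trans (size_polyD _ _) _; rewrite geq_max.
      rewrite (leq_trans (size_scale_leq _ _)) ?hsR //.
      by rewrite (leq_trans (size_scale_leq _ _)) // size_polyXn.
    by rewrite coefD !coefZ coefXn eqxx mulr1 hc addrC huv.
  + rewrite evtD !evtZ he evtXn evtD !evtZ evtXn mulrnDl.
    by rewrite !pmulrn mulrzA; congr (_ + _); exact: mulrzAC.
Qed.

Lemma Qd (A : zmodType) (phi : {additive A -> A}) (t : A) (R : {poly int}) :
  evt phi R t = 0 -> (exists i, R`_i = 1) ->
  forall d, (0 < d)%N -> exists m q, m \is monic /\ evt phi m t = evt phi q t *+ d.
Proof.
move=> hR h1; elim/ltn_ind => d IH d0.
case: (leqP d 1) => hd.
  have -> : d = 1%N by apply/eqP; rewrite eqn_leq hd d0.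
  exists 1, 1; split; first exact: monic1.
  by rewrite -polyC1 evtC.
set p := pdiv d; have pp : prime p := pdiv_prime hd.
set d' := (d %/ p)%N.
have hdd : (d' * p)%N = d := divnK (pdiv_dvd d).
have d'lt : (d' < d)%N := ltn_Pdiv (prime_gt1 pp) d0.
have d'0 : (0 < d')%N by rewrite divn_gt0 ?prime_gt0 // dvdn_leq // pdiv_dvd.
have [m1 [q1 [hm1 e1]]] := IH d' d'lt d'0.
have hR' : evt phi R t = evt phi 0 t *+ p by rewrite hR evt0 mul0rn.
have [m2 [q2 [hm2 e2]]] := @QP _ phi t p pp (size R) R 0 (leqnn _) h1 hR'.
exists (m1 * m2), (q2 * q1); split; first by rewrite monicMl.
by rewrite evtM e2 evt_nt -evtM (mulrC m1 q2) (evtM phi q2 m1) e1 evt_nt -evtM -mulrnA hdd.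
Qed.

Lemma finG (A : zmodType) (phi : {additive A -> A}) (t : A) (e : nat) (m : {poly int}) :
  (0 < e)%N -> t *+ e = 0 -> m \is monic -> evt phi m t = 0 ->
  finite_pred (fun z => exists r, z = evt phi r t).
Proof.
move=> e0 te hm hmt.
set N := size m.
exists [seq \sum_(i < N) iter i phi t *+ (val (F i)) | F : {ffun 'I_N -> 'I_e} <- enum {ffun 'I_N -> 'I_e}].
move=> z [r ->].
have m0 : m != 0 := monic_neq0 hm.
have hr : evt phi r t = evt phi (r %% m) t.
  by rewrite {1}(Pdiv.IdomainMonic.divp_eq hm r) evtD evtM hmt evt_0t add0r.
have hs : (size (r %% m)%R <= N)%N by rewrite ltnW // ltn_modp.
rewrite hr (evt_wid _ _ hs).
set r' := r %% m.
have e0' : (e%:Z != 0) by rewrite eqz_nat -lt0n.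
have hb i : (absz (r'`_i %% e%:Z)%Z < e)%N.
  by rewrite -ltz_nat gez0_abs ?modz_ge0 // ltz_pmod // ltz_nat.
apply/mapP; exists [ffun i : 'I_N => Ordinal (hb i)]; first by rewrite mem_enum.
apply: eq_bigr => i _; rewrite ffunE /=.
have ti : iter i phi t *~ e = 0 by rewrite -iter_z -pmulrn te iter_0.
rewrite {1}(divz_eq r'`_i e) mulrzDr mulrzA mulrzAC ti mul0rz add0r.
by rewrite pmulrn gez0_abs ?modz_ge0.
Qed.

Lemma zm1 (A : zmodType) (a b y : A) : a - b - ((a - y) - (b - y)) = 0.
Proof. by rewrite opprB addrA -(addrA a) (addrA (- b)) addNr add0r subrr. Qed.

Lemma rel1 (A : zmodType) (phi : {additive A -> A}) (t : A) :
  inertial phi \/ left_inertial phi ->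
  exists R, evt phi R t = 0 /\ exists i, R`_i = 1.
Proof.
pose X := fun z => exists q : {poly int}, (forall j, odd j -> q`_j = 0) /\ z = evt phi q t.
have hX : is_subgroup X.
  split; first by exists 0; split => [j _|]; rewrite ?coef0 ?evt0.
  move=> x y [q1 [o1 ->]] [q2 [o2 ->]]; exists (q1 - q2); split; last by rewrite evtB.
  by move=> j oj; rewrite coefB o1 ?o2 ?subrr.
have Xe k : X (evt phi 'X^(2 * k) t).
  exists 'X^(2 * k); split => // j oj; rewrite coefXn.
  case: eqP => // ej; move: oj; rewrite ej oddM //.
case=> H.
- have [s [_ hs]] := H X hX.
  have hk k : exists y, y \in s /\ X (phi (evt phi 'X^(2 * k) t) - y).
    have hip : img_plus phi X (phi (evt phi 'X^(2 * k) t) + 0).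
      exists (evt phi 'X^(2 * k) t), 0; split; first exact: Xe.
      by split; first by case: hX.
    have [y ys hy] := hs _ hip.
    by exists y; split => //; rewrite addr0 in hy.
  have [k1 [k2 [y [lt [[q1 [o1 e1]] [q2 [o2 e2]]]]]]] := pigeon hk.
  exists ('X^((2 * k2).+1) - 'X^((2 * k1).+1) - (q2 - q1)); split.
    by rewrite !evtB -e1 -e2 !evtXn !iterS zm1.
  exists (2 * k2).+1; rewrite !coefB !coefXn eqxx o1 ?o2 /= ?oddM //.
  have -> : ((2 * k2).+1 == (2 * k1).+1) = false.
    by apply/negbTE; rewrite eqSS eqn_pmul2l // neq_ltn lt orbT.
  by rewrite subrr mulr0n !subr0.
- have [s [_ hs]] := H X hX.
  have hk k : exists y, y \in s /\ img phi X (evt phi 'X^(2 * k) t - y).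
    have [y ys [_ hy]] := hs _ (Xe k).
    by exists y.
  have [k1 [k2 [y [lt [[u1 [q1 [o1 ->]] e1] [u2 [q2 [o2 ->]] e2]]]]]] := pigeon hk.
  exists ('X^(2 * k2) - 'X^(2 * k1) - (q2 - q1) * 'X); split.
    rewrite !evtB evtMX evt_phi evtB raddfB -e1 -e2.
    by rewrite zm1.
  case: k2 lt e2 o2 => // k2 lt e2 o2.
  have E : (2 * k2.+1 = (2 * k2).+2)%N by rewrite mulnS add2n.
  exists (2 * k2.+1)%N; rewrite !coefB !coefXn coefMX coefB !E eqxx /=.
  rewrite o1 ?o2 /= ?oddM //.
  have -> : ((2 * k2).+2 == 2 * k1)%N = false.
    by apply/negbTE; rewrite -E eqn_pmul2l // neq_ltn lt orbT.
  by rewrite subrr mulr0n !subr0.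
Qed.

Lemma minsize (P : {poly int} -> Prop) :
  (exists f, P f) -> exists f, P f /\ forall g, P g -> (size f <= size g)%N.
Proof.
case=> f0 hf0.
suff : forall n (f : {poly int}), (size f <= n)%N -> P f ->
    exists f, P f /\ forall g, P g -> (size f <= size g)%N by move/(_ _ f0 (leqnn _) hf0).
elim=> [|n IH] f hs hf.
  exists f; split => // g _; by rewrite (leq_trans hs).
case: (classic (exists g, P g /\ (size g < size f)%N)) => [[g [hg lt]]|ng].
  by apply: (IH g) => //; rewrite -ltnS (leq_trans lt hs).
exists f; split => // g hg; rewrite leqNgt; apply/negP => lt; apply: ng; by exists g.
Qed.

Theorem lemma4p3 (A : zmodType) (a : A) (phi : {additive A -> A}) :
  inertial phi \/ left_inertial phi -> finite_pred (torsion_part (Zphi phi a)).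
Proof.
move=> H.
case: (classic (exists f, f != 0 /\ evt phi f a = 0)) => [ex|nex]; last first.
  exists [:: 0] => z [hz [n [n0 hn]]].
  have [p ep] := Zphi_ev hz.
  have : n%:Z *: p = 0.
    apply/eqP; apply: contraT => nz; case: nex; exists (n%:Z *: p); split => //.
    by rewrite evtZ -ep.
  move/eqP; rewrite scale_poly_eq0 eqz_nat; case/orP => [/eqP n00|/eqP p0]; first by rewrite n00 in n0.
  by rewrite ep p0 evt0 inE.
have [f [[f0 hf] fmin]] := minsize ex.
have hdiv h : evt phi h a = 0 -> f %| h.
  move=> hh; rewrite /dvdp; apply/eqP.
  have e1 := Pdiv.Idomain.divp_eq h f.
  have : evt phi (h %% f) a = 0.
    have := congr1 (fun p => evt phi p a) e1; rewrite /= evtZ hh mul0rz evtD evtM hf evt_0t add0r.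
    by move=> <-.
  move=> hr; apply/eqP; apply: contraT => nz; exfalso.
  have := fmin _ (conj nz hr); rewrite leqNgt ltn_modp f0 //.
set g := zprimitive f.
set t := evt phi g a.
set c := zcontents f.
have c0 : c != 0 by rewrite /c zcontents_eq0.
have tc : t *~ c = 0 by rewrite /t -evtZ /c -zpolyEprim.
have ta : t *~ `|c| = 0.
  case: (lerP 0 c) => hc; first by rewrite ger0_norm.
  by rewrite ltr0_norm // mulrNz tc oppr0.
have e0 : (0 < absz c)%N by rewrite absz_gt0.
have te : t *+ absz c = 0 by rewrite pmulrn abszE.
have [R [hR h1]] := rel1 t H.
have [m [q [hm hmq]]] := Qd hR h1 e0.
have hmt : evt phi m t = 0 by rewrite hmq -evt_nt te evt_0t.
have [s hs] := finG e0 te hm hmt.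
exists s => z [hz [n [n0 hn]]]; apply: hs.
have [p ep] := Zphi_ev hz.
have hnp : evt phi (n%:Z *: p) a = 0 by rewrite evtZ -ep.
have [r1 er1] := dvdpP_int (hdiv _ hnp).
have gnp : g %| n%:Z *: p by rewrite er1 dvdp_mulr // dvdpp.
have gp : g %| p by rewrite dvdpZr // in gnp; rewrite eqz_nat -lt0n n0.
have [r2 er2] := dvdpP_int gp.
exists r2; rewrite ep er2 /g zprimitive_id mulrC evtM //.
Qed.
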